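(* Let $A$ be a bounded distributive lattice, $X$ its Priestley space, and $\kappa$ a regular cardinal. Then every existing join of fewer than $\kappa$ elements in $A$ is distributive if and only if for each $\kappa$-clopen upset $U$ of $X$ such that ${\sf cl_2}(U)$ is clopen, we have ${\sf cl_2}(U)={\sf cl}(U)$.
   Context: A join $\bigvee S$ is distributive if $a\wedge\bigvee S=\bigvee\{a\wedge s:s\in S\}$ for all $a$. The Priestley space $X$ of $A$ is the set of prime filters ordered by inclusion, with topology generated by $\{\mathfrak s(a)\setminus\mathfrak s(b)\}$, $\mathfrak s(a)=\{x:a\in x\}$; $\mathfrak s$ is an isomorphism of $A$ onto the lattice of clopen upsets. ${\sf cl}$ is topological closure and ${\sf cl_2}(S)={\uparrow}{\sf cl}(S)$ (closure in the topology of open downsets). A $\kappa$-clopen upset is a union of fewer than $\kappa$ clopen upsets. *)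

(* Defs.v *)
From HB Require Import structures.
From mathcomp Require Import all_boot all_order.
From mathcomp Require Import boolp classical_sets cardinality.
Set Implicit Arguments. Unset Strict Implicit. Unset Printing Implicit Defensive.
Import Order.TTheory.
Local Open Scope classical_set_scope.

(* |S| < |K|  (K a type standing for the cardinal kappa = |K|) *)
Definition card_lt (T K : Type) (S : set T) : Prop :=
  (S #<= [set: K])%card /\ ~ ([set: K] #<= S)%card.

Definition regular_cardinal (K : Type) : Prop :=
  infinite_set [set: K] /\
  forall F : set (set K),
    card_lt K F -> (forall V, F V -> card_lt K V) ->
    \bigcup_(V in F) V <> [set: K].

Section Lattice.
Context {disp : Order.disp_t} {A : tbDistrLatticeType disp}.

Definition is_join (S : set A) (j : A) : Prop :=
  (forall s, S s -> (s <= j)%O) /\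
  (forall u, (forall s, S s -> (s <= u)%O) -> (j <= u)%O).

Definition distributive_join (S : set A) (j : A) : Prop :=
  forall a : A, is_join [set (Order.meet a s) | s in S] (Order.meet a j).

Definition prime_filter (P : set A) : Prop :=
  [/\ P Order.top, ~ P Order.bottom,
      (forall a b, P a -> (a <= b)%O -> P b),
      (forall a b, P a -> P b -> P (Order.meet a b)) &
      (forall a b, P (Order.join a b) -> P a \/ P b)].

Definition priestley : Type := {P : set A | prime_filter P}.

Definition ple (x y : priestley) : Prop := proj1_sig x `<=` proj1_sig y.

Definition stone (a : A) : set priestley := [set x | proj1_sig x a].

Definition basic (l : seq (A * A)) : set priestley :=
  [set x | forall p, p \in l -> (stone p.1 `\` stone p.2) x].

(* topology generated by the subbasis { s(a) \ s(b) } *)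
Definition popen (U : set priestley) : Prop :=
  forall x, U x -> exists l, basic l x /\ basic l `<=` U.

Definition pclosed (U : set priestley) : Prop := popen (~` U).

Definition pclopen (U : set priestley) : Prop := popen U /\ pclosed U.

Definition pcl (S : set priestley) : set priestley :=
  [set x | forall U, popen U -> U x -> exists2 y, U y & S y].

Definition pupset (U : set priestley) : Prop :=
  forall x y, U x -> ple x y -> U y.

Definition pup (S : set priestley) : set priestley :=
  [set y | exists2 x, S x & ple x y].

Definition pcl2 (S : set priestley) : set priestley := pup (pcl S).

Definition clopen_upset (U : set priestley) : Prop := pclopen U /\ pupset U.

Definition kappa_clopen_upset (K : Type) (U : set priestley) : Prop :=
  exists F : set (set priestley),
    card_lt K F /\ (forall V, F V -> clopen_upset V) /\
    U = \bigcup_(V in F) V.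

End Lattice.

(* Main.v *)
Require Import Defs.
From HB Require Import structures.
From mathcomp Require Import all_boot all_order.
From mathcomp Require Import boolp classical_sets cardinality.
Local Open Scope classical_set_scope.
Import Order.TTheory.
Set Implicit Arguments. Unset Strict Implicit. Unset Printing Implicit Defensive.

Section Aux.
Context {disp : Order.disp_t} {A : tbDistrLatticeType disp}.
Local Notation X := (@priestley disp A).
Local Notation pt x := (proj1_sig x).

Lemma pf_top (x : X) : pt x Order.top.
Proof. by case: x => P [] . Qed.
Lemma pf_bot (x : X) : ~ pt x Order.bottom.
Proof. by case: x => P []. Qed.
Lemma pf_up (x : X) a b : pt x a -> (a <= b)%O -> pt x b.
Proof. by case: x => P [] _ _ H _ _ /=; apply: H. Qed.
Lemma pf_meet (x : X) a b : pt x a -> pt x b -> pt x (Order.meet a b).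
Proof. by case: x => P [] _ _ _ H _ /=; apply: H. Qed.
Lemma pf_join (x : X) a b : pt x (Order.join a b) -> pt x a \/ pt x b.
Proof. by case: x => P [] _ _ _ _ H /=; apply: H. Qed.
Lemma pf_meetE (x : X) a b : pt x (Order.meet a b) -> pt x a /\ pt x b.
Proof. by move=> h; split; [apply: (pf_up h); exact: leIl | apply: (pf_up h); exact: leIr]. Qed.
Lemma pf_joinl (x : X) a b : pt x a -> pt x (Order.join a b).
Proof. by move=> h; apply: (pf_up h); exact: leUl. Qed.
Lemma pf_joinr (x : X) a b : pt x b -> pt x (Order.join a b).
Proof. by move=> h; apply: (pf_up h); exact: leUr. Qed.

Lemma basic_pair (l : seq (A * A)) : exists a b,
  forall x, basic l x <-> (pt x a /\ ~ pt x b).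
Proof.
elim: l => [|p l [a [b IH]]].
  exists Order.top, Order.bottom => x; split.
    by move=> _; split; [exact: pf_top | exact: pf_bot].
  by move=> _ p; rewrite in_nil.
exists (Order.meet p.1 a), (Order.join p.2 b) => x; split.
  move=> H.
  have [h1 h2] : (stone p.1 `\` stone p.2) x by apply: H; rewrite inE eqxx.
  have [h3 h4] : pt x a /\ ~ pt x b.
    by apply/IH => q ql; apply: H; rewrite inE ql orbT.
  split; first exact: pf_meet.
  by case/pf_join.
move=> [/pf_meetE [h1 h3] h2] q; rewrite inE => /orP [/eqP ->|ql].
  by split => // h; apply: h2; exact: pf_joinl.
have [_ H] := IH x.
have := H (conj h3 (fun h => h2 (pf_joinr _ h))).
by apply.
Qed.

Lemma open_pair (O : set X) (x : X) : popen O -> O x ->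
  exists a b, pt x a /\ ~ pt x b /\ (forall y, pt y a -> ~ pt y b -> O y).
Proof.
move=> Oo Ox; have [l [bx bO]] := Oo x Ox.
have [a [b E]] := basic_pair l.
have [xa xb] := (E x).1 bx.
exists a, b; split => //; split => // y ya yb.
by apply: bO; apply/E.
Qed.

Lemma popen_pair a b : popen [set x : X | pt x a /\ ~ pt x b].
Proof.
move=> x [xa xb]; exists [:: (a, b)]; split.
  by move=> p; rewrite inE => /eqP ->.
move=> y H; have [] : (stone (a, b).1 `\` stone (a, b).2) y by apply: H; rewrite inE.
by [].
Qed.

Lemma stone_clopen_upset a : @clopen_upset disp A (stone a).
Proof.
split; last by move=> x y xa xy; apply: xy.
split.
  move=> x xa; have [l [bl H]] := @popen_pair a Order.bottom x (conj xa (@pf_bot x)).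
  by exists l; split => // y /H [].
move=> x xa; have [l [bl H]] := @popen_pair Order.top a x (conj (pf_top x) xa).
by exists l; split => // y /H [].
Qed.

Lemma master (R : A -> set A) (F0 P : set A) :
  (forall c d, (c <= d)%O -> R c d) ->
  (forall c d e, R c d -> R d e -> R c e) ->
  (forall c d d', R c d -> R c d' -> R c (Order.meet d d')) ->
  (forall c c' d d', R c d -> R c' d' -> R (Order.join c c') (Order.join d d')) ->
  F0 Order.top -> (forall a b, F0 a -> F0 b -> F0 (Order.meet a b)) ->
  (forall c d, F0 c -> R c d -> F0 d) ->
  P Order.bottom -> (forall a b, P b -> (a <= b)%O -> P a) ->
  (forall a b, P a -> P b -> P (Order.join a b)) ->
  (forall a, F0 a -> ~ P a) ->
  exists x : X, F0 `<=` pt x /\ (forall a, pt x a -> ~ P a) /\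
     (forall c d, pt x c -> R c d -> pt x d).
Proof.
move=> R1 R2 R3 R4 F0T F0I F0R PB Pdown PU disj.
have Ranti : forall c c' d, (c <= c')%O -> R c' d -> R c d.
  by move=> c c' d cc'; apply: R2; exact: R1.
pose good (M : set A) := [/\ F0 `<=` M, (forall a b, M a -> M b -> M (Order.meet a b)),
   (forall c d, M c -> R c d -> M d) & (forall a, M a -> ~ P a)].
pose Pz (M : set A) := good M \/ M = set0.
have [M [PzM Mmax]] : exists M, Pz M /\ forall B, M `<` B -> ~ Pz B.
  apply: Zorn_bigcup => G GPz Gtot.
  have goodX : forall Y, G Y -> forall a, Y a -> good Y.
    by move=> Y GY a Ya; case: (GPz Y GY) => // Y0; move: Ya; rewrite Y0.
  have [[a [Y GY Ya]]|none] := pselect (exists a, (\bigcup_(Z in G) Z) a).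
    left; split.
    - by move=> b F0b; exists Y => //; case: (goodX Y GY a Ya) => H _ _ _; exact: H.
    - move=> b c [Z1 GZ1 Z1b] [Z2 GZ2 Z2c].
      case: (Gtot Z1 Z2 GZ1 GZ2) => sub.
        exists Z2 => //; case: (goodX Z2 GZ2 c Z2c) => _ H _ _; apply: H => //.
        exact: sub.
      exists Z1 => //; case: (goodX Z1 GZ1 b Z1b) => _ H _ _; apply: H => //.
      exact: sub.
    - move=> c d [Z GZ Zc] Rcd; exists Z => //.
      by case: (goodX Z GZ c Zc) => _ _ H _; apply: H Rcd.
    - by move=> b [Z GZ Zb]; case: (goodX Z GZ b Zb) => _ _ _ H; apply: H.
  right; rewrite -subset0 => b Hb; apply: none; by exists b.
have goodF0 : good F0 by split.
have goodM : good M.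
  case: PzM => // M0; exfalso; apply: (Mmax F0); last by left.
  rewrite M0; split; first by [].
  by move=> /(_ _ F0T).
have [F0M MI MR MP] := goodM.
have ext : forall b, ~ M b -> exists m e, M m /\ R (Order.meet m b) e /\ P e.
  move=> b Mb; pose Mb' := [set e | exists2 m, M m & R (Order.meet m b) e].
  apply: contrapT => H.
  have MMb : M `<=` Mb' by move=> m Mm; exists m => //; apply: R1; exact: leIl.
  apply: (Mmax Mb').
    split => //; move=> /(_ b) H'; apply: Mb; apply: H'.
    by exists Order.top; [apply: F0M | apply: R1; exact: leIr].
  left; split.
  - by move=> c /F0M /MMb.
  - move=> c c' [m Mm Rm] [m' Mm' Rm']; exists (Order.meet m m'); first exact: MI.
    apply: R3.
      by apply: Ranti Rm; apply: leI2 => //; exact: leIl.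
    by apply: Ranti Rm'; apply: leI2 => //; exact: leIr.
  - by move=> c d [m Mm Rm] Rcd; exists m => //; apply: R2 Rcd.
  - by move=> e [m Mm Rm] Pe; apply: H; exists m, e.
have prime : forall a a', M (Order.join a a') -> M a \/ M a'.
  move=> a a' Maa'.
  have [Ma|Ma] := pselect (M a); first by left.
  have [Ma'|Ma'] := pselect (M a'); first by right.
  exfalso.
  have [m [e [Mm [Re Pe]]]] := ext a Ma.
  have [m' [e' [Mm' [Re' Pe']]]] := ext a' Ma'.
  apply: (MP (Order.join e e')); last exact: PU.
  apply: (MR (Order.meet (Order.meet m m') (Order.join a a'))).
    by apply: (MI) => //; exact: MI.
  apply: (Ranti _ (Order.join (Order.meet m a) (Order.meet m' a'))); last exact: R4.
  rewrite meetUr; apply: leU2; apply: leI2 => //; [exact: leIl | exact: leIr].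
have pfM : prime_filter M.
  split.
  - exact: F0M.
  - by move=> /MP /(_ PB).
  - by move=> a b Ma ab; apply: MR Ma (R1 _ _ ab).
  - exact: MI.
  - exact: prime.
by exists (exist _ M pfM).
Qed.

Lemma stone_le (a b : A) : (forall x : X, pt x a -> pt x b) -> (a <= b)%O.
Proof.
move=> H; apply: contrapT => nab.
destruct (@master (fun c d => (c <= d)%O) [set d | (a <= d)%O]
   [set d | (d <= b)%O]) as [x [F0x [xP _]]].
cycle 1.
- by [].
- by move=> c d e; apply: le_trans.
- by move=> c d d' h h'; rewrite lexI h h'.
- by move=> c c' d d'; apply: leU2.
- exact: lex1.
- by move=> c d h h'; rewrite /= lexI h h'.
- by move=> c d h h'; apply: le_trans h h'.
- exact: le0x.
- by move=> c d h h'; apply: le_trans h' h.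
- by move=> c d h h'; rewrite /= leUx h h'.
- by move=> d h h'; apply: nab; apply: le_trans h h'.
have xa : pt x a by apply: F0x; rewrite /= lexx.
by apply: (xP b (H x xa)); rewrite /= lexx.
Qed.

Definition RZ (Z : set X) (c : A) : set A := [set d | forall z : X, pt z c -> Z z -> pt z d].

Lemma RZ1 Z c d : (c <= d)%O -> RZ Z c d.
Proof. by move=> cd z zc _; apply: (pf_up zc cd). Qed.
Lemma RZ2 Z c d e : RZ Z c d -> RZ Z d e -> RZ Z c e.
Proof. by move=> h1 h2 z zc zZ; apply: h2 (h1 z zc zZ) zZ. Qed.
Lemma RZ3 Z c d d' : RZ Z c d -> RZ Z c d' -> RZ Z c (Order.meet d d').
Proof. by move=> h1 h2 z zc zZ; apply: pf_meet; [apply: h1 | apply: h2]. Qed.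
Lemma RZ4 Z c c' d d' : RZ Z c d -> RZ Z c' d' -> RZ Z (Order.join c c') (Order.join d d').
Proof.
move=> h1 h2 z /pf_join [zc|zc] zZ; [apply: pf_joinl; exact: h1 | apply: pf_joinr; exact: h2].
Qed.

Lemma closed_RZ Z (x : X) : pclosed Z -> (forall c d, pt x c -> RZ Z c d -> pt x d) -> Z x.
Proof.
move=> Zc H; apply: contrapT => nZ.
have [a [b [xa [xb Hab]]]] := open_pair Zc nZ.
apply: xb; apply: (H a) => // z za zZ; apply: contrapT => zb.
exact: Hab z za zb zZ.
Qed.

Lemma clopen_upset_stone (V : set X) : @clopen_upset disp A V -> exists a, V = stone a.
Proof.
move=> [[Vo Vc] Vup].
suff [a [Ga Da]] : exists a, (forall x, V x -> pt x a) /\ (forall x : X, pt x a -> V x).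
  by exists a; apply/seteqP; split => x; [exact: Ga | exact: Da].
apply: contrapT => none.
destruct (@master (RZ V) [set d | forall x : X, V x -> pt x d]
   [set d | forall x : X, pt x d -> V x]) as [x [Gx [xD xR]]].
cycle 1.
- exact: RZ1.
- exact: RZ2.
- exact: RZ3.
- exact: RZ4.
- by move=> y _; apply: pf_top.
- by move=> c d h h' y yV; apply: pf_meet; [apply: h | apply: h'].
- by move=> c d h h' y yV; apply: h' (h y yV) yV.
- by move=> y /pf_bot.
- by move=> c d h h' y yc; apply: h; apply: (pf_up yc h').
- by move=> c d h h' y /pf_join [yc|yc]; [apply: h | apply: h'].
- by move=> a h h'; apply: none; exists a.
have xV : V x := closed_RZ Vc xR.
have Wc : pclosed (~` V) by rewrite /pclosed setCK.
destruct (@master (RZ (~` V)) [set d | exists2 c, pt x c & RZ (~` V) c d]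
   [set d | (d <= Order.bottom)%O]) as [y [Fy [yP yR]]].
cycle 1.
- exact: RZ1.
- exact: RZ2.
- exact: RZ3.
- exact: RZ4.
- by exists Order.top; [apply: pf_top | apply: RZ1].
- move=> c c' [e xe Re] [e' xe' Re']; exists (Order.meet e e'); first exact: pf_meet.
  move=> z /pf_meetE [ze ze'] zW; apply: pf_meet; [exact: Re | exact: Re'].
- by move=> c d [e xe Re] Rcd; exists e => //; apply: RZ2 Rcd.
- by rewrite /= lexx.
- by move=> c d h h'; apply: le_trans h' h.
- by move=> c d h h'; rewrite /= leUx h h'.
- move=> a [c xc Rc] a0; apply: (xD c xc) => z zc; apply: contrapT => nV.
  have za := Rc z zc nV.
  by apply: (@pf_bot z); apply: (pf_up za a0).
have yW : (~` V) y := closed_RZ Wc yR.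
apply: yW; apply: (Vup x y xV) => d xd; apply: Fy; exists d => //; exact: RZ1.
Qed.

Lemma sub_pcl (U : set X) : U `<=` pcl U.
Proof. by move=> x Ux O _ Ox; exists x. Qed.

Lemma pcl_sub_pcl2 (U : set X) : pcl U `<=` pcl2 U.
Proof. by move=> x h; exists x. Qed.

Lemma cl2_sub (U : set X) b : U `<=` stone b -> pcl2 U `<=` stone b.
Proof.
move=> sub y [z zcl zy]; apply: zy; apply: contrapT => nz.
have [w wn wU] := zcl _ (stone_clopen_upset b).1.2 nz.
by apply: wn; apply: sub.
Qed.

Lemma join_cl2 (S : set A) j : is_join S j ->
  pcl2 (\bigcup_(V in stone @` S) V) = stone j.
Proof.
move=> [jub jl].
set U := \bigcup_(V in stone @` S) V.
have Uin : forall (y : X) s, S s -> pt y s -> U y.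
  by move=> y s Ss ys; exists (stone s) => //; exists s.
apply/seteqP; split.
  apply: cl2_sub => y [V [s Ss <-] ys]; exact: (pf_up ys (jub s Ss)).
move=> x xj.
destruct (@master
   (fun c => [set b | forall s, S s -> (Order.meet c s <= b)%O])
   (fun b => forall s, S s -> (Order.meet j s <= b)%O) [set b | ~ pt x b]) as [y [_ [yP yR]]].
cycle 1.
- by move=> c d cd s _; apply: le_trans cd; exact: leIl.
- move=> c d e Rcd Rde s Ss; apply: le_trans (Rde s Ss).
  by rewrite lexI Rcd //= leIr.
- by move=> c d d' h h' s Ss; rewrite lexI h // h'.
- by move=> c c' d d' h h' s Ss; rewrite meetUl; apply: leU2; [apply: h | apply: h'].
- by move=> s _; apply: lex1.
- by move=> c d h h' s Ss; rewrite lexI h // h'.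
- move=> c d h h' s Ss; apply: le_trans (h' s Ss).
  by rewrite lexI h //= leIr.
- exact: pf_bot.
- by move=> c d h h' xc; apply: h; apply: (pf_up xc h').
- by move=> c d h h' /pf_join [].
- move=> a Ra na; apply: na; apply: (pf_up xj); apply: jl => s Ss.
  apply: le_trans (Ra s Ss).
  by rewrite lexI jub //= lexx.
exists y; last by move=> a ya; apply: contrapT; exact: yP a ya.
move=> O Oo Oy; have [a [b [ya [yb Hab]]]] := open_pair Oo Oy.
apply: contrapT => none.
apply: yb; apply: (yR a) => // s Ss.
apply: stone_le => z /pf_meetE [za zs]; apply: contrapT => zb.
by apply: none; exists z; [exact: Hab | exact: Uin z s Ss zs].
Qed.

End Aux.

Lemma card_lt_img (T U K : Type) (f : T -> U) (S : set T) :
  card_lt K S -> card_lt K (f @` S).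
Proof.
move=> [h1 h2]; split; first exact: card_le_trans (card_image_le f S) h1.
by move=> h; apply: h2; exact: card_le_trans h (card_image_le f S).
Qed.

Theorem theorem5p17 (disp : Order.disp_t) (A : tbDistrLatticeType disp)
  (K : Type) (hK : regular_cardinal K) :
  (forall (S : set A) (j : A), card_lt K S -> is_join S j ->
     distributive_join S j)
  <->
  (forall U : set (@priestley disp A), kappa_clopen_upset K U ->
     pclopen (pcl2 U) -> pcl2 U = pcl U).
Proof.
split.
- move=> H U [F [cF [clF UE]]] Hcl.
  have [f hf] : {f : set (@priestley disp A) -> A & forall V, F V -> V = stone (f V)}.
    apply: (@choice _ _ (fun V a => F V -> V = stone a)) => V; have [FV|nFV] := pselect (F V).
      by have [a ->] := clopen_upset_stone (clF V FV); exists a.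
    by exists Order.top.
  have [j Ej] : exists j, pcl2 U = stone j.
    apply: clopen_upset_stone; split => // y z [w wcl wy] yz.
    by exists w => // a /wy /yz.
  set S := f @` F.
  have UE' : forall y, U y <-> exists2 s, S s & proj1_sig y s.
    move=> y; rewrite UE; split.
      by move=> [V FV Vy]; exists (f V); [by rewrite /S; exists V | by move: Vy; rewrite {1}(hf V FV)].
    by move=> [s [V FV <-] ys]; exists V => //; rewrite (hf V FV).
  have isj : is_join S j.
    split.
      move=> s Ss; apply: stone_le => x xs.
      have : pcl2 U x by apply: pcl_sub_pcl2; apply: sub_pcl; apply/UE'; exists s.
      by rewrite Ej.
    move=> u ub; apply: stone_le => x xj.
    have : pcl2 U x by rewrite Ej.
    by apply: cl2_sub => y /UE' [s Ss ys]; apply: (pf_up ys (ub s Ss)).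
  have Hd := H S j (card_lt_img f cF) isj.
  apply/seteqP; split; last exact: pcl_sub_pcl2.
  move=> x; rewrite Ej => xj O Oo Ox.
  have [a [b [xa [xb Hab]]]] := open_pair Oo Ox.
  apply: contrapT => none.
  apply: xb; have [_ hl] := Hd a.
  apply: (pf_up (pf_meet xa xj)); apply: hl => _ [s Ss <-].
  apply: stone_le => z /pf_meetE [za zs]; apply: contrapT => zb.
  by apply: none; exists z; [exact: Hab | apply/UE'; exists s].
- move=> H S j cS hj a; split.
    by move=> _ [s Ss <-]; apply: leI2 => //; exact: hj.1.
  move=> u hu; apply: stone_le => x /pf_meetE [xa xj].
  set U := \bigcup_(V in stone @` S) V.
  have Ej := join_cl2 hj.
  have kU : kappa_clopen_upset K U.
    exists (stone @` S); split; first exact: card_lt_img.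
    by split => // V [s Ss <-]; exact: stone_clopen_upset.
  have cl : pclopen (pcl2 U) by rewrite Ej; exact: (stone_clopen_upset j).1.
  have xcl : pcl U x by rewrite -(H U kU cl) Ej.
  apply: contrapT => xu.
  have [y [ya yu] [V [s Ss <-] ys]] := xcl _ (@popen_pair _ _ a u) (conj xa xu).
  apply: yu; apply: (pf_up (pf_meet ya ys)); apply: hu; by exists s.
Qed.
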